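(* Let $k,l$ be positive integers with $k \ge 3l$. Then every graph $G$ with $\chi(G) > k$ contains a weakly $l$-connected subgraph $H$ such that $\chi(H) > k-2l$.
   Context: Graphs are finite and simple; $\chi$ denotes the chromatic number. A separation of a graph $G$ is a pair $(A,B)$ with $A\cup B=V(G)$ such that every edge has both ends in $A$ or both ends in $B$; it is proper if $A-B\neq\emptyset$ and $B-A\neq\emptyset$; its order is $|A\cap B|$. A graph $G$ is weakly $k$-connected if for every proper separation $(A,B)$ of $G$ of order at most $k$ we have $\min\{|A-B|,|B-A|\} < |A\cap B|$. *)

(* Defs.v *)
From mathcomp Require Import all_boot.
Set Implicit Arguments. Unset Strict Implicit. Unset Printing Implicit Defensive.

Definition is_graph (T : finType) (V : {set T}) (e : rel T) : Prop :=
  (forall x y, e x y -> (x \in V) && (y \in V)) /\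
  (forall x y, e x y = e y x) /\
  (forall x, ~~ e x x).

Definition is_subgraph (T : finType) (S : {set T}) (f : rel T)
  (V : {set T}) (e : rel T) : Prop :=
  is_graph S f /\ S \subset V /\ (forall x y, f x y -> e x y).

Definition colorable (T : finType) (V : {set T}) (e : rel T) (k : nat) : bool :=
  [exists c : {ffun T -> 'I_#|T|.+1},
     [forall x in V, c x < k] &&
     [forall x in V, forall y in V, e x y ==> (c x != c y)]].

(* chromatic number: least k such that (V,e) is k-colourable
   (#|T| colours always suffice, so searching in [0, #|T|] is exhaustive). *)
Definition chi (T : finType) (V : {set T}) (e : rel T) : nat :=
  find (colorable V e) (iota 0 #|T|.+1).

Definition separation (T : finType) (V : {set T}) (e : rel T) (A B : {set T}) : Prop :=
  A \subset V /\ B \subset V /\ A :|: B = V /\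
  (forall x y, e x y -> ((x \in A) && (y \in A)) || ((x \in B) && (y \in B))).

Definition proper_separation (T : finType) (V : {set T}) (e : rel T) (A B : {set T}) : Prop :=
  separation V e A B /\ A :\: B != set0 /\ B :\: A != set0.

Definition weakly_connected (T : finType) (V : {set T}) (e : rel T) (k : nat) : Prop :=
  forall A B : {set T}, proper_separation V e A B -> #|A :&: B| <= k ->
    minn #|A :\: B| #|B :\: A| < #|A :&: B|.

(* Main.v *)
Require Import Defs.
From mathcomp Require Import all_boot.
From mathcomp Require Import zify.
From Stdlib Require Import Classical.

Set Implicit Arguments. Unset Strict Implicit. Unset Printing Implicit Defensive.

Section Aux.
Variable T : finType.

Definition cb (r : rel T) (X : {set T}) (j : nat) : Prop :=
  exists c : T -> nat, (forall x, x \in X -> c x < j) /\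
    (forall x y, x \in X -> y \in X -> r x y -> c x <> c y).

Lemma cb_mono r X j j' : j <= j' -> cb r X j -> cb r X j'.
Proof.
move=> le [c [H1 H2]]; exists c; split=> // x Hx.
exact: leq_trans (H1 x Hx) le.
Qed.

Lemma colorable_full (V : {set T}) (r : rel T) :
  (forall x, ~~ r x x) -> colorable V r #|T|.
Proof.
move=> irr; apply/existsP.
exists [ffun x => widen_ord (leqnSn #|T|) (enum_rank x)].
apply/andP; split.
- by apply/forallP=> x; apply/implyP=> _; rewrite ffunE /=.
- apply/forallP=> x; apply/implyP=> _; apply/forallP=> y; apply/implyP=> _.
  apply/implyP=> rxy; rewrite !ffunE; apply/negP=> /eqP H.
  have H' : enum_rank x = enum_rank y by apply/val_inj; exact: (congr1 val H).
  move/enum_rank_inj: H' => exy.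
  by move: rxy; rewrite exy (negbTE (irr y)).
Qed.

Lemma colorable_cb V r j : colorable V r j -> cb r V j.
Proof.
case/existsP=> c /andP[/forallP H1 /forallP H2].
exists (fun x => nat_of_ord (c x)); split.
- move=> x Hx; exact: (implyP (H1 x) Hx).
- move=> x y Hx Hy rxy E.
  move: (implyP (H2 x) Hx) => /forallP /(_ y) /implyP /(_ Hy) /implyP /(_ rxy).
  by move=> /eqP; apply; apply: val_inj.
Qed.

Lemma cb_colorable V r j : j <= #|T|.+1 -> cb r V j -> colorable V r j.
Proof.
move=> le [c [H1 H2]]; apply/existsP.
exists [ffun x => (inord (c x) : 'I_#|T|.+1)].
apply/andP; split.
- apply/forallP=> x; apply/implyP=> Hx; rewrite ffunE inordK; first exact: H1.
  exact: leq_trans (H1 x Hx) le.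
- apply/forallP=> x; apply/implyP=> Hx; apply/forallP=> y; apply/implyP=> Hy.
  apply/implyP=> rxy; rewrite !ffunE; apply/eqP=> E.
  apply: (H2 x y Hx Hy rxy).
  have := congr1 val E; rewrite /= !inordK //.
  + exact: leq_trans (H1 y Hy) le.
  + exact: leq_trans (H1 x Hx) le.
Qed.

Lemma chi_le_N (V : {set T}) (r : rel T) : (forall x, ~~ r x x) -> chi V r <= #|T|.
Proof.
move=> irr; rewrite leqNgt; apply/negP=> lt.
have := before_find 0 lt. by rewrite nth_iota // add0n colorable_full.
Qed.

Lemma chi_gtP (V : {set T}) (r : rel T) j : (forall x, ~~ r x x) -> (j < chi V r <-> ~ cb r V j).
Proof.
move=> irr; have leN := chi_le_N V irr; split.
- move=> lt Hcb.
  have := before_find 0 lt; rewrite nth_iota; last lia.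
  by rewrite add0n cb_colorable //; lia.
- move=> ncb; rewrite ltnNge; apply/negP=> le.
  have hs : has (colorable V r) (iota 0 #|T|.+1).
    apply/hasP; exists #|T|; [rewrite mem_iota; lia| exact: colorable_full].
  have := nth_find 0 hs; rewrite nth_iota; last by move: leN; rewrite /chi; lia.
  rewrite add0n => /colorable_cb H; apply: ncb; exact: cb_mono le H.
Qed.

Lemma minimal_set (P : {set T} -> Prop) (X : {set T}) : P X ->
  exists Y : {set T}, Y \subset X /\ P Y /\ forall Z : {set T}, Z \proper Y -> ~ P Z.
Proof.
have [n leX] : exists n, #|X| <= n by exists #|X|.
elim: n X leX => [|n IH] X leX PX.
- exists X; split => //; split => // Z /proper_card; lia.
- case: (classic (exists Z : {set T}, Z \proper X /\ P Z)) => [[Z [pZ PZ]]|none].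
  + have [|Y [sY [PY mY]]] := IH Z _ PZ; first by move/proper_card: pZ; lia.
    exists Y; split => //; exact: subset_trans sY (proper_sub pZ).
  + exists X; split => //; split => // Z pZ PZ; apply: none; by exists Z.
Qed.

Lemma free_color (L : seq nat) k : size L < k -> exists i, i < k /\ i \notin L.
Proof.
move=> lt; apply: NNPP => H.
have sub : {subset iota 0 k <= L}.
  move=> i; rewrite mem_iota add0n => /andP[_ ik].
  apply: NNPP => ni; apply: H; exists i; split => //; exact/negP.
have := uniq_leq_size (iota_uniq 0 k) sub; rewrite size_iota => le.
by rewrite ltnNge le in lt.
Qed.

Lemma size_avoid (P : seq nat) k :
  k - size P <= size [seq i <- iota 0 k | i \notin P].
Proof.
rewrite size_filter.
have E := count_predC (fun i => i \in P) (iota 0 k).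
have E2 : count (fun i => i \notin P) (iota 0 k) = count (predC (fun i => i \in P)) (iota 0 k)
  by apply: eq_count.
have le : count (fun i => i \in P) (iota 0 k) <= size P.
  rewrite -size_filter; apply: uniq_leq_size; first exact/filter_uniq/iota_uniq.
  by move=> i; rewrite mem_filter => /andP[].
move: E; rewrite size_iota E2; lia.
Qed.

End Aux.

Section Main.
Variable T : finType.
Variable e : rel T.
Hypothesis esymm : forall x y, e x y = e y x.
Hypothesis eirr : forall x, ~~ e x x.
Variables (k l : nat) (W : {set T}).
Hypothesis Wnc : ~ cb e W k.
Hypothesis Wmin : forall Z : {set T}, Z \proper W -> cb e Z k.

Definition bd (U : {set T}) : {set T} :=
  [set x in U | [exists y, [&& e x y, y \in W & y \notin U]]].

Lemma degree v : v \in W -> k <= #|[set y in W | e v y]|.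
Proof.
move=> vW; rewrite leqNgt; apply/negP => lt.
set N := [set y in W | e v y] in lt.
have pZ : W :\ v \proper W by apply/properP; split; [exact: subsetDl | exists v => //; rewrite !inE eqxx].
have [c [H1 H2]] := Wmin pZ.
have [i [ik iL]] : exists i, i < k /\ i \notin [seq c y | y <- enum N].
  by apply: free_color; rewrite size_map -cardE.
apply: Wnc; exists (fun x => if x == v then i else c x); split.
- move=> x xW; case: eqP => [//|/eqP xv]; apply: H1; by rewrite !inE xv.
- move=> x y xW yW exy.
  case: (eqVneq x v) => [xv|xv]; case: (eqVneq y v) => [yv|yv].
  + by move: exy; rewrite xv yv (negbTE (eirr v)).
  + subst x; move=> E; move: iL; rewrite E; apply/negP/negPn.
    apply: map_f; by rewrite mem_enum !inE yW exy.
  + subst y; move=> E; move: iL; rewrite -E; apply/negP/negPn.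
    apply: map_f; by rewrite mem_enum !inE xW esymm exy.
  + apply: H2 => //; by rewrite !inE ?xv ?yv.
Qed.

Lemma glue (U : {set T}) j : U \subset W -> U :\: bd U != set0 ->
  j + #|bd U| <= k -> ~ cb e U j.
Proof.
move=> sUW /set0Pn [v vint] le [c2 [C1 C2]].
have pZ : W :\: (U :\: bd U) \proper W.
  apply/properP; split; first exact: subsetDl.
  exists v; last by rewrite inE vint.
  by move: vint; rewrite inE => /andP[_ /(subsetP sUW)].
have [c1 [H1 H2]] := Wmin pZ.
set P := [seq c1 y | y <- enum (bd U)].
set L := [seq i <- iota 0 k | i \notin P].
have sL : j <= size L.
  have := size_avoid P k; rewrite size_map -cardE -/L; lia.
have uL : uniq L by exact/filter_uniq/iota_uniq.
apply: Wnc; exists (fun x => if x \in U :\: bd U then nth 0 L (c2 x) else c1 x); split.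
- move=> x xW; case: ifP => xi.
  + have : nth 0 L (c2 x) \in L.
      apply: mem_nth; apply: leq_trans sL; apply: C1.
      by move: xi; rewrite inE => /andP[].
    by rewrite mem_filter mem_iota add0n => /andP[_ /andP[]].
  + apply: H1; by rewrite inE xi.
- have inbd : forall x y, x \in U :\: bd U -> y \in W -> e x y -> y \in U.
    move=> x y; rewrite !inE => /andP[nb xU] yW exy; apply: NNPP => yU.
    move: nb; rewrite xU /=; move/negP; apply; apply/existsP; exists y.
    by rewrite exy yW; apply/negP.
  have side : forall x y, x \in U :\: bd U -> y \in W -> y \notin U :\: bd U -> e x y ->
      nth 0 L (c2 x) <> c1 y.
    move=> x y xi yW yi exy E.
    have yU := inbd x y xi yW exy.
    have yb : y \in bd U by move: yi; rewrite inE yU andbT negbK.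
    have : nth 0 L (c2 x) \in L.
      apply: mem_nth; apply: leq_trans sL; apply: C1.
      by move: xi; rewrite inE => /andP[].
    rewrite mem_filter E => /andP[/negP nP _]; apply: nP.
    by apply: map_f; rewrite mem_enum.
  move=> x y xW yW exy.
  case: ifP => xi; case: ifP => yi.
  + have xU : x \in U by move: xi; rewrite inE => /andP[].
    have yU : y \in U by move: yi; rewrite inE => /andP[].
    have cx : c2 x < size L by apply: leq_trans sL; apply: C1.
    have cy : c2 y < size L by apply: leq_trans sL; apply: C1.
    move=> /eqP; rewrite nth_uniq // => /eqP; exact: C2.
  + apply: side => //; by rewrite yi.
  + move=> E; apply: (side y x yi xW); [by rewrite xi | by rewrite esymm | by rewrite E].
  + apply: H2 => //; by rewrite inE ?xi ?yi.
Qed.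

Section Piece.
Variable U : {set T}.
Hypothesis sUW : U \subset W.
Hypothesis hk : 3 * l <= k.
Hypothesis Ubd : #|bd U| <= 2 * l.
Hypothesis Uint : U :\: bd U != set0.
Hypothesis Umin : forall Z : {set T}, Z \proper U ->
  ~ (Z \subset W /\ #|bd Z| <= 2 * l /\ Z :\: bd Z != set0).

Definition fU : rel T := fun x y => [&& e x y, x \in U & y \in U].

Lemma sep_sym A B : separation U fU A B -> separation U fU B A.
Proof.
case=> [sA [sB [AB ed]]]; split => //; split => //; split; first by rewrite setUC.
move=> x y /ed; by rewrite orbC.
Qed.

Lemma bd_piece A B : separation U fU A B ->
  bd A \subset (A :&: B) :|: (bd U :&: (A :\: B)).
Proof.
case=> [sA [sB [AB ed]]]; apply/subsetP => x.
rewrite /bd !inE => /andP[xA /existsP [y /and3P [exy yW yA]]].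
rewrite xA /=; case: (boolP (x \in B)) => //= xB.
have xU : x \in U by apply: (subsetP sA).
rewrite xU /= andbT; apply/existsP; exists y; rewrite exy yW /=.
apply/negP => yU.
have := ed x y; rewrite /fU exy xU yU /= => /(_ isT).
by case/orP => /andP[H1 H2]; [move: yA; rewrite H2 | move: xB; rewrite H1].
Qed.

Lemma int_piece A B : separation U fU A B ->
  (A :\: B) :\: bd U \subset A :\: bd A.
Proof.
move=> sep; apply/subsetP => x.
rewrite in_setD in_setD => /andP[nbU /andP[nB xA]].
rewrite in_setD xA andbT; apply/negP => xb.
move: (subsetP (bd_piece sep) x xb); rewrite in_setU !in_setI in_setD.
by rewrite (negbTE nB) (negbTE nbU) /= andbF.
Qed.

Lemma half A B : separation U fU A B -> #|A :&: B| <= l ->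
  #|A :&: B| <= #|A :\: B| -> #|A :&: B| <= #|B :\: A| ->
  B :\: A != set0 -> A :\: B != set0 ->
  (exists x, x \in (A :\: B) :\: bd U) -> False.
Proof.
move=> sep tl tA tB nBA nAB [x xi].
have sep' := sep_sym sep.
have [sA [sB [AB _]]] := sep.
set t := #|A :&: B| in tl tA tB.
have ab : #|bd U :&: (A :\: B)| + #|bd U :&: (B :\: A)| <= #|bd U|.
  have := cardsUI (bd U :&: (A :\: B)) (bd U :&: (B :\: A)).
  have -> : (bd U :&: (A :\: B)) :&: (bd U :&: (B :\: A)) = set0.
    apply/setP => z; rewrite !inE.
    by case: (z \in A); case: (z \in B); rewrite ?andbF.
  rewrite cards0 addn0 => <-.
  apply: subset_leq_card; apply/subsetP => z; rewrite !inE.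
  by case/orP => /andP[->].
have bdA : #|bd A| <= t + #|bd U :&: (A :\: B)|.
  apply: leq_trans (subset_leq_card (bd_piece sep)) _.
  have := cardsUI (A :&: B) (bd U :&: (A :\: B)); rewrite /t; lia.
have bdB : #|bd B| <= t + #|bd U :&: (B :\: A)|.
  apply: leq_trans (subset_leq_card (bd_piece sep')) _.
  have := cardsUI (B :&: A) (bd U :&: (B :\: A)); rewrite /t setIC; lia.
have pA : A \proper U.
  apply/properP; split => //; case/set0Pn: nBA => y; rewrite inE => /andP[yA yB].
  by exists y => //; apply: (subsetP sB).
have pB : B \proper U.
  apply/properP; split => //; case/set0Pn: nAB => y; rewrite inE => /andP[yB yA].
  by exists y => //; apply: (subsetP sA).
case: (leqP (t + #|bd U :&: (A :\: B)|) (2 * l)) => H.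
- apply: (Umin pA); split; first exact: subset_trans sA sUW.
  split; first exact: leq_trans bdA H.
  apply/set0Pn; exists x; exact: (subsetP (int_piece sep)).
- have bt : #|bd U :&: (B :\: A)| < t by lia.
  apply: (Umin pB); split; first exact: subset_trans sB sUW.
  split; first lia.
  have : (B :\: A) :\: bd U != set0.
    apply/negP => /eqP E.
    have : B :\: A \subset bd U :&: (B :\: A).
      apply/subsetP => z zBA; rewrite inE zBA andbT; apply: NNPP => zn.
      have : z \in (B :\: A) :\: bd U by rewrite inE zBA andbT; apply/negP.
      by rewrite E inE.
    move/subset_leq_card; lia.
  case/set0Pn => y yi; apply/set0Pn; exists y; exact: (subsetP (int_piece sep')).
Qed.

Lemma wc : weakly_connected U fU l.
Proof.
move=> A B [sep [nAB nBA]] tl; rewrite ltnNge; apply/negP => H.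
have tA : #|A :&: B| <= #|A :\: B| by move: H; rewrite leq_min => /andP[].
have tB : #|A :&: B| <= #|B :\: A| by move: H; rewrite leq_min => /andP[].
case: (classic (exists x, x \in (A :\: B) :\: bd U)) => [ex|nA].
  exact: (half sep tl tA tB nBA nAB ex).
case: (classic (exists x, x \in (B :\: A) :\: bd U)) => [ex|nB].
  by apply: (half (sep_sym sep)); rewrite // setIC.
have [sA [sB [AB ed]]] := sep.
case/set0Pn: Uint => v vi.
have vU : v \in U by move: vi; rewrite inE => /andP[].
have vnb : v \notin bd U by move: vi; rewrite inE => /andP[].
have vW : v \in W := subsetP sUW v vU.
have deg := degree vW.
have NU : [set y in W | e v y] \subset U :\ v.
  apply/subsetP => y; rewrite inE => /andP[yW evy]; rewrite in_setD1; apply/andP; split.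
  - by apply/negP=> /eqP yv; move: evy; rewrite yv (negbTE (eirr v)).
  - apply: NNPP => yU; move/negP: vnb; apply; rewrite /bd inE vU /=.
    apply/existsP; exists y; rewrite evy yW /=; exact/negP.
have cU : #|U| <= #|A :&: B| + #|bd U|.
  have : U \subset (A :&: B) :|: bd U.
    apply/subsetP => x xU; rewrite in_setU in_setI.
    have : x \in A :|: B by rewrite AB.
    rewrite in_setU; case xA: (x \in A); case xB: (x \in B) => //= _.
    + apply: NNPP => nb; apply: nA; exists x; rewrite !in_setD xA xB /= andbT; exact/negP.
    + apply: NNPP => nb; apply: nB; exists x; rewrite !in_setD xA xB /= andbT; exact/negP.
  move/subset_leq_card => h; have := cardsUI (A :&: B) (bd U); lia.
have := cardsD1 v U; rewrite vU.
move/subset_leq_card: NU => h2.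
lia.
Qed.

End Piece.

End Main.

Theorem lemma2p1 (k l : nat) (T : finType) (V : {set T}) (e : rel T) :
  0 < k -> 0 < l -> 3 * l <= k ->
  is_graph V e -> k < chi V e ->
  exists (S : {set T}) (f : rel T),
    is_subgraph S f V e /\ weakly_connected S f l /\ k - 2 * l < chi S f.
Proof.
move=> k0 l0 hk [einV [esymm eirr]] hchi.
have ncV : ~ cb e V k by apply/(chi_gtP _ _ eirr).
have [W [sWV [Wnc Wmin']]] := @minimal_set T (fun Z : {set T} => ~ cb e Z k) V ncV.
have Wmin : forall Z : {set T}, Z \proper W -> cb e Z k.
  by move=> Z pZ; apply: NNPP; apply: Wmin'.
have bdW : bd e W W = set0.
  apply/setP => x; rewrite /bd !inE; apply/negP => /andP[_ /existsP [y /and3P [_ yW]]].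
  by rewrite yW.
have QW : W \subset W /\ #|bd e W W| <= 2 * l /\ W :\: bd e W W != set0.
  split => //; rewrite bdW cards0; split => //.
  rewrite setD0; apply/negP => /eqP W0; apply: Wnc; exists (fun _ => 0); split.
  - by move=> x; rewrite W0 inE.
  - by move=> x y; rewrite W0 inE.
have [U [sUW [[_ [Ubd Uint]] Umin]]] := @minimal_set T
  (fun Z : {set T} => Z \subset W /\ #|bd e W Z| <= 2 * l /\ Z :\: bd e W Z != set0) W QW.
exists U, (fU e U); split; [|split].
- split; [split; [|split]|split].
  + by move=> x y /and3P[_ -> ->].
  + by move=> x y; rewrite /fU esymm; case: (x \in U); case: (y \in U); rewrite ?andbF.
  + by move=> x; rewrite /fU (negbTE (eirr x)).
  + exact: subset_trans sUW sWV.
  + by move=> x y /and3P[].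
- exact: (wc esymm eirr Wnc Wmin sUW hk Ubd Uint Umin).
- have firr : forall x, ~~ fU e U x x by move=> x; rewrite /fU (negbTE (eirr x)).
  apply/(chi_gtP _ _ firr) => [[c [C1 C2]]].
  apply: (glue esymm Wnc Wmin (j := k - 2 * l) sUW Uint); first lia.
  exists c; split => // x y xU yU exy; apply: C2 => //; by rewrite /fU exy xU yU.
Qed.
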